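(* Let $k\ge 1$, $H>0$, $\beta>0$, $h>0$, and consider a hierarchical-leadership flock $[0,1,\dots,k]$ with leader sets $\mathcal{L}(i)\subseteq\{0,\dots,i-1\}$, $\mathcal{L}(i)\neq\varnothing$ for $i\ge1$. Let $\tilde x_0[n],\dots,\tilde x_k[n]\in\mathbb{R}^3$ ($n\ge 0$) be positions, for $j\in\mathcal{L}(i)$ let $a_{ij}[n]=H/(1+|\tilde x_j[n]-\tilde x_i[n]|^2/2)^{\beta}$ and $a_{ij}[n]=0$ otherwise, $d_i[n]=\sum_{j\in\mathcal{L}(i)}a_{ij}[n]$, and let $L_n$ be the $k\times k$ matrix (indices $1,\dots,k$) with $(L_n)_{ii}=d_i[n]$, $(L_n)_{ij}=-a_{ij}[n]$ for $1\le j<i$, $(L_n)_{ij}=0$ for $j>i$; put $S[n]=I-hL_n$. Suppose $|x[n]|^2\le B$ for all $n\ge0$, where $x[n]=(\tilde x_i[n]-\tilde x_0[n])_{i=1}^k\in\mathbb{R}^{3k}$, let $d_\ast=H/(1+B)^\beta$, $\rho_h=1-hd_\ast$, and assume $0<h<\frac{1}{2kH}$. Let $T$ be the $k\times k$ matrix with $T_{ij}=1$ for $i\ge j$ and $T_{ij}=0$ otherwise. Then for all $n\ge 0$, \[S[n]\prec\rho_hT\quad\text{and}\quad S[n-1]\cdots S[0]\prec\rho_h^{\,n}T^n.\]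
   Context: $B\prec C$ means $|b_{ij}|\le c_{ij}$ for all entries. A hierarchical-leadership flock is one whose agents are labeled $0,\dots,k$ so that $a_{ij}>0$ only if $j<i$ and each agent $i>0$ has a nonempty leader set $\mathcal{L}(i)=\{j:a_{ij}>0\}$. For $n=0$ the empty product is the identity. *)

(* Defs.v *)
From mathcomp Require Import all_boot all_order all_algebra.
From mathcomp Require Import reals exp.
Set Implicit Arguments. Unset Strict Implicit. Unset Printing Implicit Defensive.
Import Order.TTheory GRing.Theory Num.Theory.
Local Open Scope ring_scope.

Section Flock.
Variable R : realType.

Definition mx_prec m n (B C : 'M[R]_(m, n)) : Prop :=
  forall i j, `|B i j| <= C i j.

Definition sqnorm3 (v : 'rV[R]_3) : R := \sum_(l < 3) v 0 l ^+ 2.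

Definition hierarchical (k : nat) (L : 'I_k.+1 -> {set 'I_k.+1}) : Prop :=
  (forall i j : 'I_k.+1, j \in L i -> (j < i)%N) /\
  (forall i : 'I_k.+1, (0 < i)%N -> L i != set0).

Definition weight (H beta : R) (k : nat) (L : 'I_k.+1 -> {set 'I_k.+1})
  (x : 'I_k.+1 -> 'rV[R]_3) (i j : 'I_k.+1) : R :=
  if j \in L i then H / (1 + sqnorm3 (x j - x i) / 2) `^ beta else 0.

Definition degree (H beta : R) (k : nat) (L : 'I_k.+1 -> {set 'I_k.+1})
  (x : 'I_k.+1 -> 'rV[R]_3) (i : 'I_k.+1) : R :=
  \sum_(j in L i) weight H beta L x i j.

(* L_n, indexed by agents 1..k (the matrix index i : 'I_k stands for agent i+1) *)
Definition lapl (H beta : R) (k : nat) (L : 'I_k.+1 -> {set 'I_k.+1})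
  (x : 'I_k.+1 -> 'rV[R]_3) : 'M[R]_k :=
  \matrix_(i < k, j < k)
    if i == j then degree H beta L x (lift ord0 i)
    else if (j < i)%N then - weight H beta L x (lift ord0 i) (lift ord0 j)
    else 0.

Definition Smx (H beta h : R) (k : nat) (L : 'I_k.+1 -> {set 'I_k.+1})
  (x : 'I_k.+1 -> 'rV[R]_3) : 'M[R]_k :=
  1%:M - h *: lapl H beta L x.

Fixpoint Sprod (H beta h : R) (k : nat) (L : 'I_k.+1 -> {set 'I_k.+1})
  (X : nat -> 'I_k.+1 -> 'rV[R]_3) (n : nat) : 'M[R]_k :=
  match n with
  | 0 => 1%:M
  | n'.+1 => Smx H beta h L (X n') *m Sprod H beta h L X n'
  end.

Definition Tmx (k : nat) : 'M[R]_k := \matrix_(i < k, j < k) (j <= i)%N%:R.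

Fixpoint mxpow (k : nat) (M : 'M[R]_k) (n : nat) : 'M[R]_k :=
  match n with
  | 0 => 1%:M
  | n'.+1 => M *m mxpow M n'
  end.

(* |x[n]|^2 with x[n] = (x_i[n] - x_0[n])_{i=1..k} in R^{3k} *)
Definition rel_sqnorm (k : nat) (x : 'I_k.+1 -> 'rV[R]_3) : R :=
  \sum_(i < k) sqnorm3 (x (lift ord0 i) - x ord0).

End Flock.

(* Main.v *)
Require Import Defs.
From mathcomp Require Import all_boot all_order all_algebra.
From mathcomp Require Import reals exp.
From mathcomp Require Import lra.
Import Order.TTheory GRing.Theory Num.Theory.
Local Open Scope ring_scope.

Set Implicit Arguments.
Section Helpers.
Variable R : realType.

Lemma prec_mul m n p (A C : 'M[R]_(m,n)) (B D : 'M[R]_(n,p)) :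
  mx_prec A C -> mx_prec B D -> mx_prec (A *m B) (C *m D).
Proof.
move=> hA hB i j; rewrite !mxE; apply: le_trans (ler_norm_sum _ _ _) _.
apply: ler_sum => l _; rewrite normrM; apply: ler_pM => //.
Qed.

Lemma sqnorm3_ge0 (v : 'rV[R]_3) : 0 <= sqnorm3 v.
Proof. by apply: sumr_ge0 => l _; rewrite sqr_ge0. Qed.

Lemma sqnorm3_sub (u v : 'rV[R]_3) :
  sqnorm3 (u - v) <= 2 * sqnorm3 u + 2 * sqnorm3 v.
Proof.
rewrite /sqnorm3 !mulr_sumr -big_split /=; apply: ler_sum => l _.
rewrite !mxE; set a := u 0 l; set b := v 0 l.
have := sqr_ge0 (a + b); rewrite !expr2; nra.
Qed.

Lemma sqnorm3_0 : sqnorm3 (0 : 'rV[R]_3) = 0.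
Proof. by rewrite /sqnorm3 big1 // => l _; rewrite mxE expr0n. Qed.

Lemma pair_le k (x : 'I_k.+1 -> 'rV[R]_3) (i j : 'I_k.+1) : i != j ->
  sqnorm3 (x i - x ord0) + sqnorm3 (x j - x ord0) <= rel_sqnorm x.
Proof.
move=> nij.
have -> : rel_sqnorm x = \sum_(p < k.+1) sqnorm3 (x p - x ord0).
  by rewrite big_ord_recl subrr sqnorm3_0 add0r.
rewrite (bigD1 i) //= (bigD1 j) /=; last by rewrite eq_sym nij.
rewrite addrA lerDl; apply: sumr_ge0 => p _; exact: sqnorm3_ge0.
Qed.

End Helpers.
Unset Implicit Arguments.
Arguments sqnorm3_ge0 {R}. Arguments sqnorm3_sub {R}. Arguments pair_le {R k}. Arguments prec_mul {R m n p}.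

Theorem corollary1 (R : realType) (k : nat) (H beta h B : R)
  (L : 'I_k.+1 -> {set 'I_k.+1}) (X : nat -> 'I_k.+1 -> 'rV[R]_3) :
  (1 <= k)%N -> 0 < H -> 0 < beta -> 0 < h ->
  hierarchical L ->
  (forall n, rel_sqnorm (X n) <= B) ->
  h < (2 * k%:R * H)^-1 ->
  let dstar := H / (1 + B) `^ beta in
  let rho := 1 - h * dstar in
  forall n : nat,
    mx_prec (Smx H beta h L (X n)) (rho *: Tmx R k) /\
    mx_prec (Sprod H beta h L X n) (rho ^+ n *: mxpow (Tmx R k) n).
Proof.
move=> k1 H0 b0 h0 [Hlt Hne] HB hlt dstar rho.
have B0 : 0 <= B.
  apply: le_trans (HB 0%N); apply: sumr_ge0 => p _; exact: sqnorm3_ge0.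
set K : R := k%:R.
have K1 : 1 <= K by rewrite /K ler1n.
have hKH : h * (2 * K * H) < 1.
  have c0 : 0 < 2 * K * H by rewrite !mulr_gt0 // (lt_le_trans ltr01 K1).
  by rewrite -(ltr_pM2r c0) mulVf ?gt_eqF // in hlt.
have one1 : (1:R) = 1 `^ beta by rewrite powR1.
have P1 : 1 <= (1 + B) `^ beta.
  rewrite {1}one1; apply: ge0_ler_powR; rewrite ?nnegrE; lra.
have ds0 : 0 < dstar by rewrite /dstar divr_gt0 // (lt_le_trans ltr01 P1).
have dsH : dstar <= H.
  rewrite /dstar ler_pdivrMr ?(lt_le_trans ltr01 P1) //.
  by rewrite -{1}(mulr1 H) ler_wpM2l // ltW.
have wbnd : forall x i j, 0 <= weight H beta L x i j <= H.
  move=> x i j; rewrite /weight; case: ifP => _; last by rewrite lexx ltW.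
  have Q1 : 1 <= (1 + sqnorm3 (x j - x i) / 2) `^ beta.
    rewrite {1}one1; apply: ge0_ler_powR; rewrite ?nnegrE;
    have := sqnorm3_ge0 (x j - x i); lra.
  apply/andP; split; first by apply: divr_ge0; [exact: ltW | exact: powR_ge0].
  rewrite ler_pdivrMr ?(lt_le_trans ltr01 Q1) //.
  by rewrite -{1}(mulr1 H) ler_wpM2l // ltW.
have wlow : forall n i j, j \in L i -> dstar <= weight H beta L (X n) i j.
  move=> n i j jL; rewrite /weight jL.
  have nij : i != j by apply/eqP => eij; have := Hlt _ _ jL; rewrite eij ltnn.
  have s2 : sqnorm3 (X n j - X n i) <= 2 * B.
    have := pair_le (X n) _ _ nij; have := HB n.
    have := sqnorm3_sub (X n j - X n ord0) (X n i - X n ord0).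
    rewrite opprB addrA subrK; lra.
  have s0 := sqnorm3_ge0 (X n j - X n i).
  have Q : (1 + sqnorm3 (X n j - X n i) / 2) `^ beta <= (1 + B) `^ beta.
    apply: ge0_ler_powR; rewrite ?nnegrE; try lra.
  have Q0 : 0 < (1 + sqnorm3 (X n j - X n i) / 2) `^ beta.
    apply: powR_gt0; lra.
  rewrite /dstar; apply: ler_wpM2l; first exact: ltW.
  rewrite lef_pV2 // posrE //.
  exact: lt_le_trans ltr01 P1.
have dbnd : forall x i, degree H beta L x i <= K * H.
  move=> x i; rewrite /degree.
  apply: le_trans (_ : \sum_(j in L i) H <= _).
    by apply: ler_sum => j _; case/andP: (wbnd x i j).
  rewrite sumr_const -mulr_natr [H * _]mulrC; apply: ler_wpM2r; first exact: ltW.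
  rewrite /K ler_nat.
  have sub : L i \subset [set~ i].
    apply/subsetP => j jL; rewrite !inE; apply/eqP => eij.
    by have := Hlt _ _ jL; rewrite eij ltnn.
  by have := subset_leq_card sub; rewrite cardsC1 card_ord.
have dlow : forall n i, dstar <= degree H beta L (X n) (lift ord0 i).
  move=> n i; have := Hne (lift ord0 i) isT; case/set0Pn => j jL.
  rewrite /degree (bigD1 j) //= -[X in X <= _]addr0 lerD ?wlow //.
  by apply: sumr_ge0 => p _; case/andP: (wbnd (X n) (lift ord0 i) p).
have Sprec : forall n, mx_prec (Smx H beta h L (X n)) (rho *: Tmx R k).
  move=> n i j; rewrite /Smx /Tmx !mxE.
  case: (eqVneq i j) => [<-|nij].
    rewrite ?eqxx leqnn mulr1 /rho.
    have -> : (true%:R : R) = 1 by [].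
    have := dlow n i; have := dbnd (X n) (lift ord0 i).
    set d := degree _ _ _ _ _ => d1 d2.
    have hd : h * d <= h * (K * H) by rewrite ler_wpM2l // ltW.
    have hs : h * dstar <= h * d by rewrite ler_wpM2l // ltW.
    rewrite ler_norml; apply/andP; split; lra.
  rewrite ?(negbTE nij) /=.
  rewrite sub0r normrN.
  case: ltnP => ji.
    rewrite (ltnW ji) mulr1.
    have := wbnd (X n) (lift ord0 i) (lift ord0 j).
    set w := weight _ _ _ _ _ _ => /andP [w0 w1].
    rewrite mulrN normrN normrM gtr0_norm // ger0_norm //.
    have hw : h * w <= h * H by rewrite ler_wpM2l // ltW.
    have hd : h * dstar <= h * H by rewrite ler_wpM2l // ltW.
    have hk : h * H * 1 <= h * H * K.
      by apply: ler_wpM2l => //; rewrite mulr_ge0 // ltW.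
    rewrite /rho; lra.
  have -> : (j <= i)%N = false.
    by apply: negbTE; rewrite -ltnNge ltn_neqAle ji andbT.
  by rewrite mulr0 normr0 mulr0.
move=> n; split; first exact: Sprec n.
elim: n => [|n IH] /=.
  move=> i j; rewrite expr0 scale1r !mxE.
  by case: (i == j); rewrite /= ?normr1 ?normr0.
have E : (rho *: Tmx R k) *m (rho ^+ n *: mxpow (Tmx R k) n)
  = (rho ^+ n.+1) *: (Tmx R k *m mxpow (Tmx R k) n).
  by rewrite -scalemxAl -scalemxAr scalerA exprS.
rewrite -E; exact: prec_mul (Sprec n) IH.
Qed.
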